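(* Fix a real number $\tau\neq 0$ and consider the following linear operators on smooth functions $\Phi(x,t)$: $$H=\partial_t,\quad P=\partial_x,\quad K=-x\,\frac{e^{\tau\partial_t}-1}{\tau}-t\,e^{-\tau\partial_t}\partial_x,\quad D=-x\partial_x-t\,\frac{1-e^{-\tau\partial_t}}{\tau},$$ $$C_1=(x^2+t^2e^{-\tau\partial_t})\frac{e^{\tau\partial_t}-1}{\tau}+2xt\partial_x+\tau x\partial_x+\tau x^2\partial_x^2,$$ $$C_2=-(x^2+t^2e^{-2\tau\partial_t})\partial_x-2xt\,\frac{1-e^{-\tau\partial_t}}{\tau}+\tau t\,e^{-2\tau\partial_t}\partial_x,$$ where $e^{a\tau\partial_t}$ denotes the shift operator $\Phi(x,t)\mapsto\Phi(x,t+a\tau)$ and, in expressions involving $e^{\pm\tau H}$, $e^{\pm\tau H}$ is interpreted as $e^{\pm\tau\partial_t}$. Then these operators satisfy the commutation relations $[K,H]=e^{-\tau H}P$, $[K,P]=(e^{\tau H}-1)/\tau$, $[H,P]=0$, $[D,H]=(1-e^{-\tau H})/\tau$, $[D,C_1]=-C_1+\tau D^2$, $[H,C_1]=-2D$, $[D,P]=P$, $[D,C_2]=-C_2$, $[P,C_2]=2D$, $[K,C_1]=C_2$, $[K,C_2]=C_1-\tau D^2$, $[C_1,C_2]=-\tau(DC_2+C_2D)$, $[H,C_2]=e^{-\tau H}K+Ke^{-\tau H}$, $[P,C_1]=-2K-\tau(DP+PD)$, $[K,D]=0$, i.e. they give a representation of the algebra $U_\tau(so(2,2))$. As $\tau\to0$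 they reduce to the vector fields $H=\partial_t$, $P=\partial_x$, $K=-t\partial_x-x\partial_t$, $D=-x\partial_x-t\partial_t$, $C_1=(x^2+t^2)\partial_t+2xt\partial_x$, $C_2=-(x^2+t^2)\partial_x-2xt\partial_t$.
   Context: Here $(e^{\tau\partial_t}-1)/\tau$ and $(1-e^{-\tau\partial_t})/\tau$ are the forward and backward difference operators in $t$ with step $\tau$; all products are compositions of operators, with multiplication operators by $x$, $t$ understood. *)

(* Defs.v *)
From Stdlib Require Import Reals List.
From Coquelicot Require Import Coquelicot.
Open Scope R_scope.

Definition Fun2 := R -> R -> R.
Definition Op := Fun2 -> Fun2.

Definition dx : Op := fun Phi x t => Derive (fun y => Phi y t) x.
Definition dt : Op := fun Phi x t => Derive (fun s => Phi x s) t.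

(* shift operator e^{a d_t} : Phi(x,t) |-> Phi(x,t+a) *)
Definition shift (a : R) : Op := fun Phi x t => Phi x (t + a).

Definition mulf (f : Fun2) : Op := fun Phi x t => f x t * Phi x t.

Definition op_id : Op := fun Phi => Phi.
Definition op_zero : Op := fun _ _ _ => 0.
Definition op_add (A B : Op) : Op := fun Phi x t => A Phi x t + B Phi x t.
Definition op_sub (A B : Op) : Op := fun Phi x t => A Phi x t - B Phi x t.
Definition op_opp (A : Op) : Op := fun Phi x t => - A Phi x t.
Definition op_scal (c : R) (A : Op) : Op := fun Phi x t => c * A Phi x t.
Definition op_comp (A B : Op) : Op := fun Phi => A (B Phi).
Definition comm (A B : Op) : Op := op_sub (op_comp A B) (op_comp B A).

(* forward / backward differences (e^{tau d_t}-1)/tau and (1-e^{-tau d_t})/tau *)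
Definition fwd (tau : R) : Op := op_scal (/ tau) (op_sub (shift tau) op_id).
Definition bwd (tau : R) : Op := op_scal (/ tau) (op_sub op_id (shift (- tau))).

Definition X : Fun2 := fun x _ => x.
Definition T : Fun2 := fun _ t => t.

Definition Hop : Op := dt.
Definition Pop : Op := dx.
Definition Kop (tau : R) : Op :=
  op_sub (op_opp (op_comp (mulf X) (fwd tau)))
         (op_comp (mulf T) (op_comp (shift (- tau)) dx)).
Definition Dop (tau : R) : Op :=
  op_sub (op_opp (op_comp (mulf X) dx)) (op_comp (mulf T) (bwd tau)).
Definition C1op (tau : R) : Op :=
  op_add (op_add (op_add
    (op_comp (op_add (mulf (fun x _ => x ^ 2))
                     (op_comp (mulf (fun _ t => t ^ 2)) (shift (- tau))))
             (fwd tau))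
    (op_comp (mulf (fun x t => 2 * x * t)) dx))
    (op_scal tau (op_comp (mulf X) dx)))
    (op_scal tau (op_comp (mulf (fun x _ => x ^ 2)) (op_comp dx dx))).
Definition C2op (tau : R) : Op :=
  op_add (op_sub
    (op_opp (op_comp (op_add (mulf (fun x _ => x ^ 2))
                             (op_comp (mulf (fun _ t => t ^ 2)) (shift (- 2 * tau))))
                     dx))
    (op_comp (mulf (fun x t => 2 * x * t)) (bwd tau)))
    (op_scal tau (op_comp (mulf T) (op_comp (shift (- 2 * tau)) dx))).

Fixpoint iter_partial (w : list bool) (Phi : Fun2) : Fun2 :=
  match w with
  | nil => Phi
  | b :: w' => (if b then dx else dt) (iter_partial w' Phi)
  end.

Definition smooth (Phi : Fun2) : Prop :=
  forall (w : list bool) (x t : R),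
    ex_derive (fun y => iter_partial w Phi y t) x /\
    ex_derive (fun s => iter_partial w Phi x s) t /\
    continuous (fun p : R * R => iter_partial w Phi (fst p) (snd p)) (x, t).

Definition op_eq (A B : Op) : Prop :=
  forall Phi : Fun2, smooth Phi -> forall x t : R, A Phi x t = B Phi x t.

(* Main.v *)
From Stdlib Require Import Reals List ZArith FunctionalExtensionality Lra.
From Coquelicot Require Import Coquelicot.
Require Import Defs.
Open Scope R_scope.
Import ListNotations.

Definition dxn (m : nat) (G : Fun2) : Fun2 := Nat.iter m dx G.
Definition dtn (n : nat) (G : Fun2) : Fun2 := Nat.iter n dt G.
Definition atom (Phi : Fun2) (m n : nat) : Fun2 := dxn m (dtn n Phi).

Lemma ip_app : forall w w' G, iter_partial w (iter_partial w' G) = iter_partial (w ++ w') G.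
Proof. induction w as [|b w IH]; intros; simpl; [reflexivity| rewrite IH; reflexivity]. Qed.

Lemma smooth_ip : forall w G, smooth G -> smooth (iter_partial w G).
Proof. intros w G HG w' x t. rewrite ip_app. apply HG. Qed.

Lemma smooth_dx : forall G, smooth G -> smooth (dx G).
Proof. intros G HG. exact (smooth_ip [true] G HG). Qed.
Lemma smooth_dt : forall G, smooth G -> smooth (dt G).
Proof. intros G HG. exact (smooth_ip [false] G HG). Qed.

Lemma smooth_dxn : forall m G, smooth G -> smooth (dxn m G).
Proof. induction m; intros; simpl; auto. apply smooth_dx. apply IHm; auto. Qed.
Lemma smooth_dtn : forall m G, smooth G -> smooth (dtn m G).
Proof. induction m; intros; simpl; auto. apply smooth_dt. apply IHm; auto. Qed.
Lemma smooth_atom : forall Phi m n, smooth Phi -> smooth (atom Phi m n).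
Proof. intros. apply smooth_dxn, smooth_dtn; auto. Qed.

Lemma smooth_exdx : forall G x t, smooth G -> ex_derive (fun y => G y t) x.
Proof. intros G x t HG. exact (proj1 (HG nil x t)). Qed.
Lemma smooth_exdt : forall G x t, smooth G -> ex_derive (fun s => G x s) t.
Proof. intros G x t HG. exact (proj1 (proj2 (HG nil x t))). Qed.
Lemma smooth_cont : forall G x t, smooth G -> continuity_2d_pt G x t.
Proof. intros G x t HG. apply continuity_2d_pt_filterlim. exact (proj2 (proj2 (HG nil x t))). Qed.

Lemma loc2_all : forall (P : R -> R -> Prop) x y, (forall u v, P u v) -> locally_2d P x y.
Proof. intros. exists (mkposreal 1 Rlt_0_1). intros; auto. Qed.

Lemma schwarz_G : forall G x t, smooth G -> dt (dx G) x t = dx (dt G) x t.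
Proof.
  intros G x t HG. unfold dt, dx. symmetry. apply (Schwarz G x t).
  - apply loc2_all. intros u v. repeat split.
    + apply smooth_exdx; auto.
    + apply smooth_exdt; auto.
    + apply (smooth_exdx (dt G)). apply smooth_dt; auto.
    + apply (smooth_exdt (dx G)). apply smooth_dx; auto.
  - apply (smooth_cont (dx (dt G))). apply smooth_dx, smooth_dt; auto.
  - apply (smooth_cont (dt (dx G))). apply smooth_dt, smooth_dx; auto.
Qed.

Lemma dt_dxn : forall m H x s, smooth H -> dt (dxn m H) x s = dxn m (dt H) x s.
Proof.
  induction m; intros H x s HH; [reflexivity|].
  change (dt (dx (dxn m H)) x s = dx (dxn m (dt H)) x s).
  rewrite schwarz_G by (apply smooth_dxn; auto).
  unfold dx. apply Derive_ext. intro y. apply IHm; auto.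
Qed.

Lemma dt_atom : forall Phi m n x s, smooth Phi -> dt (atom Phi m n) x s = atom Phi m (S n) x s.
Proof. intros. unfold atom. rewrite dt_dxn; [reflexivity|]. apply smooth_dtn; auto. Qed.

Record mono := Mono { mc : R; mi : nat; mj : nat; mk : Z; mm : nat; mn : nat }.

Section S.
Variable Phi : Fun2.
Variable tau : R.

Definition den_mono (q : mono) (x t : R) : R :=
  mc q * x ^ mi q * t ^ mj q * atom Phi (mm q) (mn q) x (t + IZR (mk q) * tau).

Fixpoint den_poly (p : list mono) (x t : R) : R :=
  match p with nil => 0 | q :: p' => den_mono q x t + den_poly p' x t end.

Definition den_fun (p : list mono) : Fun2 := fun x t => den_poly p x t.

Lemma den_app : forall p1 p2 x t, den_poly (p1 ++ p2) x t = den_poly p1 x t + den_poly p2 x t.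
Proof. induction p1; intros; simpl; [ring| rewrite IHp1; ring]. Qed.

Definition m_dx (q : mono) : list mono :=
  match q with Mono c i j k m n =>
    match i with
    | O => [Mono c O j k (S m) n]
    | S i' => [Mono (c * IZR (Z.of_nat (S i'))) i' j k m n; Mono c (S i') j k (S m) n]
    end end.
Definition m_dt (q : mono) : list mono :=
  match q with Mono c i j k m n =>
    match j with
    | O => [Mono c i O k m (S n)]
    | S j' => [Mono (c * IZR (Z.of_nat (S j'))) i j' k m n; Mono c i (S j') k m (S n)]
    end end.
Fixpoint p_dx (p : list mono) := match p with nil => nil | q :: p' => m_dx q ++ p_dx p' end.
Fixpoint p_dt (p : list mono) := match p with nil => nil | q :: p' => m_dt q ++ p_dt p' end.

Definition incT (q : mono) := match q with Mono c i j k m n => Mono c i (S j) k m n end.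
Definition incX (q : mono) := match q with Mono c i j k m n => Mono c (S i) j k m n end.
Definition scaleM (a : R) (q : mono) := match q with Mono c i j k m n => Mono (a * c) i j k m n end.
Fixpoint shiftT (a : R) (j : nat) (q : mono) : list mono :=
  match j with O => [q] | S j' => let r := shiftT a j' q in map incT r ++ map (scaleM a) r end.
Definition m_shift (s : Z) (q : mono) : list mono :=
  match q with Mono c i j k m n => shiftT (IZR s * tau) j (Mono c i O (k + s) m n) end.
Fixpoint p_shift (s : Z) (p : list mono) := match p with nil => nil | q :: p' => m_shift s q ++ p_shift s p' end.

Lemma den_incT : forall p x t, den_poly (map incT p) x t = t * den_poly p x t.
Proof. induction p as [|[c i j k m n] p IH]; intros; simpl; [ring|]. rewrite IH. unfold den_mono; simpl. ring. Qed.
Lemma den_incX : forall p x t, den_poly (map incX p) x t = x * den_poly p x t.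
Proof. induction p as [|[c i j k m n] p IH]; intros; simpl; [ring|]. rewrite IH. unfold den_mono; simpl. ring. Qed.
Lemma den_scaleM : forall a p x t, den_poly (map (scaleM a) p) x t = a * den_poly p x t.
Proof. induction p as [|[c i j k m n] p IH]; intros; simpl; [ring|]. rewrite IH. unfold den_mono; simpl. ring. Qed.

Lemma den_shiftT : forall a j q x t, den_poly (shiftT a j q) x t = (t + a) ^ j * den_mono q x t.
Proof.
  induction j; intros; simpl. ring.
  rewrite den_app, den_incT, den_scaleM, IHj. ring.
Qed.

Lemma den_shift : forall s p x t, den_poly (p_shift s p) x t = den_poly p x (t + IZR s * tau).
Proof.
  induction p as [|[c i j k m n] p IH]; intros; simpl; [ring|].
  rewrite den_app, IH. f_equal. unfold m_shift. rewrite den_shiftT.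
  unfold den_mono; simpl.
  replace (t + IZR s * tau + IZR k * tau) with (t + IZR (k + s) * tau) by (rewrite plus_IZR; ring).
  ring.
Qed.

Hypothesis HPhi : smooth Phi.

Lemma is_derive_eq : forall (f : R -> R) (x l l' : R), is_derive f x l -> l = l' -> is_derive f x l'.
Proof. intros; subst; auto. Qed.

Lemma mono_dx : forall c i K (g : R -> R) x dg, is_derive g x dg ->
  is_derive (fun y => c * y^i * K * g y) x (c * (INR i * x^(pred i)) * K * g x + c * x^i * K * dg).
Proof. intros. auto_derive. apply (ex_intro _ dg); auto. replace (Derive (fun x0 => g x0) x) with dg by (symmetry; apply is_derive_unique; exact H). ring. Qed.

Lemma mono_dt : forall c X j (g : R -> R) t a dg, is_derive g (t + a) dg ->
  is_derive (fun s => c * X * s^j * g (s + a)) t (c * X * (INR j * t^(pred j)) * g (t + a) + c * X * t^j * dg).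
Proof. intros. auto_derive. apply (ex_intro _ dg); auto. replace (Derive (fun x0 => g x0) (t + a)) with dg by (symmetry; apply is_derive_unique; exact H). ring. Qed.

Lemma der_dx : forall p x t, is_derive (fun y => den_poly p y t) x (den_poly (p_dx p) x t).
Proof.
  induction p as [|[c i j k m n] p IH]; intros; simpl.
  - auto_derive; auto.
  - rewrite den_app. apply (is_derive_plus (fun y => den_mono _ y t) (fun y => den_poly p y t)); [|apply IH].
    unfold den_mono; cbn [mc mi mj mk mm mn].
    eapply is_derive_eq.
    + apply (mono_dx c i (t ^ j) (fun y => atom Phi m n y (t + IZR k * tau))).
      apply Derive_correct. apply smooth_exdx; apply smooth_atom; auto.
    + destruct i as [|i']; unfold m_dx, den_poly, den_mono; cbn [mc mi mj mk mm mn].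
      * change (atom Phi (S m) n) with (dx (atom Phi m n)). unfold dx. simpl INR. ring.
      * change (atom Phi (S m) n) with (dx (atom Phi m n)). unfold dx.
        change (Z.pos (Pos.of_succ_nat i')) with (Z.of_nat (S i')). rewrite <- INR_IZR_INZ. cbn [pred]. ring.
Qed.

Lemma der_dt : forall p x t, is_derive (fun s => den_poly p x s) t (den_poly (p_dt p) x t).
Proof.
  induction p as [|[c i j k m n] p IH]; intros; simpl.
  - auto_derive; auto.
  - rewrite den_app. apply (is_derive_plus (fun s => den_mono _ x s) (fun s => den_poly p x s)); [|apply IH].
    unfold den_mono; cbn [mc mi mj mk mm mn].
    eapply is_derive_eq.
    + apply (mono_dt c (x ^ i) j (fun s => atom Phi m n x s)).
      apply Derive_correct. apply smooth_exdt; apply smooth_atom; auto.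
    + pose proof (dt_atom Phi m n x (t + IZR k * tau) HPhi) as E2. unfold dt in E2. rewrite E2.
      destruct j as [|j']; unfold m_dt, den_poly, den_mono; cbn [mc mi mj mk mm mn].
      * simpl INR. ring.
      * change (Z.pos (Pos.of_succ_nat j')) with (Z.of_nat (S j')). rewrite <- INR_IZR_INZ. cbn [pred]. ring.
Qed.
End S.

Inductive sop : Type :=
| sDx | sDt | sSP | sSM | sX | sT | sId | sZero
| sAdd (a b : sop) | sSub (a b : sop) | sOpp (a : sop) | sScal (c : R) (a : sop) | sComp (a b : sop).

Fixpoint den_op (tau : R) (s : sop) : Op :=
  match s with
  | sDx => dx | sDt => dt | sSP => shift tau | sSM => shift (- tau)
  | sX => mulf X | sT => mulf T | sId => op_id | sZero => op_zero
  | sAdd a b => op_add (den_op tau a) (den_op tau b)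
  | sSub a b => op_sub (den_op tau a) (den_op tau b)
  | sOpp a => op_opp (den_op tau a)
  | sScal c a => op_scal c (den_op tau a)
  | sComp a b => op_comp (den_op tau a) (den_op tau b)
  end.

Definition p_scal (c : R) (p : list mono) := map (scaleM c) p.

Fixpoint app_op (tau : R) (s : sop) (p : list mono) : list mono :=
  match s with
  | sDx => p_dx p | sDt => p_dt p
  | sSP => p_shift tau 1 p | sSM => p_shift tau (-1) p
  | sX => map incX p | sT => map incT p | sId => p | sZero => nil
  | sAdd a b => app_op tau a p ++ app_op tau b p
  | sSub a b => app_op tau a p ++ p_scal (-1) (app_op tau b p)
  | sOpp a => p_scal (-1) (app_op tau a p)
  | sScal c a => p_scal c (app_op tau a p)
  | sComp a b => app_op tau a (app_op tau b p)
  end.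

Lemma main_den : forall Phi tau, smooth Phi -> forall s p,
  den_op tau s (den_fun Phi tau p) = den_fun Phi tau (app_op tau s p).
Proof.
  intros Phi tau HPhi s. induction s; intros p;
    apply functional_extensionality; intro x; apply functional_extensionality; intro t;
    unfold den_fun; simpl.
  - unfold dx. apply is_derive_unique. apply der_dx; auto.
  - unfold dt. apply is_derive_unique. apply der_dt; auto.
  - unfold shift. rewrite den_shift. f_equal. ring.
  - unfold shift. rewrite den_shift. f_equal. ring.
  - unfold mulf, X. rewrite den_incX. reflexivity.
  - unfold mulf, T. rewrite den_incT. reflexivity.
  - reflexivity.
  - reflexivity.
  - unfold op_add. rewrite IHs1, IHs2. unfold den_fun. rewrite den_app. reflexivity.
  - unfold op_sub. rewrite IHs1, IHs2. unfold den_fun, p_scal. rewrite den_app, den_scaleM. ring.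
  - unfold op_opp. rewrite IHs. unfold den_fun, p_scal. rewrite den_scaleM. ring.
  - unfold op_scal. rewrite IHs. unfold den_fun, p_scal. rewrite den_scaleM. ring.
  - unfold op_comp. rewrite IHs2, IHs1. reflexivity.
Qed.

Definition unitp : list mono := [Mono 1 0 0 0 0 0].

Lemma den_unit : forall Phi tau, den_fun Phi tau unitp = Phi.
Proof.
  intros. apply functional_extensionality; intro x; apply functional_extensionality; intro t.
  unfold den_fun, unitp; simpl. unfold den_mono; simpl. unfold atom, dxn, dtn; simpl.
  replace (t + 0 * tau) with t by ring. ring.
Qed.

Lemma eval_ok : forall Phi tau s x t, smooth Phi ->
  den_op tau s Phi x t = den_poly Phi tau (app_op tau s unitp) x t.
Proof.
  intros. rewrite <- (den_unit Phi tau) at 1. rewrite main_den by auto. reflexivity.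
Qed.

Lemma reflect_eq : forall tau a b,
  (forall Phi x t, den_poly Phi tau (app_op tau a unitp) x t = den_poly Phi tau (app_op tau b unitp) x t) ->
  op_eq (den_op tau a) (den_op tau b).
Proof. intros tau a b H Phi HPhi x t. rewrite !eval_ok by auto. apply H. Qed.

Lemma mulf_x2 : mulf (fun x _ => x ^ 2) = op_comp (mulf X) (mulf X).
Proof. apply functional_extensionality; intro G. apply functional_extensionality; intro x; apply functional_extensionality; intro t. unfold mulf, op_comp, X. ring. Qed.
Lemma mulf_t2 : mulf (fun _ t => t ^ 2) = op_comp (mulf T) (mulf T).
Proof. apply functional_extensionality; intro G. apply functional_extensionality; intro x; apply functional_extensionality; intro t. unfold mulf, op_comp, T. ring. Qed.
Lemma mulf_2xt : mulf (fun x t => 2 * x * t) = op_scal 2 (op_comp (mulf X) (mulf T)).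
Proof. apply functional_extensionality; intro G. apply functional_extensionality; intro x; apply functional_extensionality; intro t. unfold mulf, op_comp, op_scal, X, T. ring. Qed.
Lemma shift_m2 : forall tau, shift (- 2 * tau) = op_comp (shift (- tau)) (shift (- tau)).
Proof. intros. apply functional_extensionality; intro G. apply functional_extensionality; intro x; apply functional_extensionality; intro t. unfold shift, op_comp. f_equal. ring. Qed.

Ltac reify tau e :=
  lazymatch e with
  | dx => constr:(sDx) | dt => constr:(sDt)
  | shift tau => constr:(sSP) | shift (- tau) => constr:(sSM)
  | mulf X => constr:(sX) | mulf T => constr:(sT)
  | op_id => constr:(sId) | op_zero => constr:(sZero)
  | op_add ?a ?b => let ra := reify tau a in let rb := reify tau b in constr:(sAdd ra rb)
  | op_sub ?a ?b => let ra := reify tau a in let rb := reify tau b in constr:(sSub ra rb)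
  | op_opp ?a => let ra := reify tau a in constr:(sOpp ra)
  | op_scal ?c ?a => let ra := reify tau a in constr:(sScal c ra)
  | op_comp ?a ?b => let ra := reify tau a in let rb := reify tau b in constr:(sComp ra rb)
  | comm ?a ?b => let ra := reify tau a in let rb := reify tau b in constr:(sSub (sComp ra rb) (sComp rb ra))
  | fwd tau => constr:(sScal (/ tau) (sSub sSP sId))
  | bwd tau => constr:(sScal (/ tau) (sSub sId sSM))
  end.

Ltac solve_opeq tau :=
  lazymatch goal with |- op_eq ?A ?B =>
    let a := reify tau A in let b := reify tau B in
    change (op_eq (den_op tau a) (den_op tau b)); apply reflect_eq; intros ?Phi ?x ?t;
    cbv -[Rplus Rmult Ropp Rinv Rminus Rdiv IZR pow atom]; field; auto
  end.


Lemma is_lim_eq : forall (f : R -> R) (l l' : R), is_lim f 0 l -> l = l' -> is_lim f 0 l'.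
Proof. intros; subst; auto. Qed.

Lemma LQ : forall (f : R -> R) (t : R), ex_derive f t ->
  is_lim (fun h => / h * (f (t + h) - f t)) 0 (Derive f t).
Proof.
  intros f t Hd. apply is_lim_spec. intro eps.
  pose proof (Derive_correct f t Hd) as D. apply is_derive_Reals in D.
  destruct (D eps (cond_pos eps)) as [delta Hdel].
  exists delta. intros y Hy Hy0.
  assert (Hy' : Rabs y < delta).
  { change (Rabs (y + - 0) < delta) in Hy. rewrite Ropp_0, Rplus_0_r in Hy. exact Hy. }
  specialize (Hdel y Hy0 Hy').
  replace (/ y * (f (t + y) - f t)) with ((f (t + y) - f t) / y) by (field; auto). exact Hdel.
Qed.

Lemma Lplus : forall (f g : R -> R) (a b : R), is_lim f 0 a -> is_lim g 0 b -> is_lim (fun h => f h + g h) 0 (a + b).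
Proof. intros. apply is_lim_plus'; auto. Qed.
Lemma Lscal : forall (f : R -> R) (a c : R), is_lim f 0 a -> is_lim (fun h => c * f h) 0 (c * a).
Proof. intros. apply (is_lim_scal_l f c 0 a); auto. Qed.
Lemma Lh : forall (f : R -> R) (a : R), is_lim f 0 a -> is_lim (fun h => h * f h) 0 0.
Proof. intros f a H.
  assert (E : Rbar_mult (Finite 0) (Finite a) = Finite 0) by (simpl; f_equal; ring).
  assert (L : is_lim (fun y => y * f y) 0 (Rbar_mult 0 a)).
  { apply is_lim_mult; auto. apply is_lim_id. simpl; auto. }
  rewrite E in L. exact L. Qed.

Lemma loc_all : forall (P : R -> Prop), (forall y, y <> 0 -> P y) -> Rbar_locally' 0 P.
Proof. intros P H. exists (mkposreal 1 Rlt_0_1). intros y _ Hy. apply H; auto. Qed.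

Lemma LB : forall (f : R -> R) (t : R), ex_derive f t ->
  is_lim (fun h => / h * (f t - f (t + - h))) 0 (Derive f t).
Proof.
  intros f t Hd. pose proof (LQ f t Hd) as L.
  assert (L2 : is_lim (fun y => (fun h => / h * (f (t + h) - f t)) (-1 * y + 0)) 0 (Derive f t)).
  { apply (is_lim_comp_lin (fun h => / h * (f (t + h) - f t)) (-1) 0 0 (Derive f t)); [|lra]. simpl. replace (-1 * 0 + 0) with 0 by ring. exact L. }
  refine (is_lim_ext_loc _ _ _ _ (loc_all _ _) L2). intros y Hy. simpl.
  replace (t + (-1 * y + 0)) with (t + - y) by ring. field. lra.
Qed.

Lemma LC : forall (g : R -> R) (t c : R), ex_derive g t -> is_lim (fun h => g (t + c * h)) 0 (g t).
Proof.
  intros g t c Hd.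
  assert (Li : is_lim (fun h => t + c * h) 0 t).
  { pose proof (Lplus (fun _ => t) (fun h => c * h) t (c * 0) (is_lim_const t 0) (Lscal (fun h => h) 0 c (is_lim_id 0))) as L.
    replace (t + c * 0) with t in L by ring. exact L. }
  apply (is_lim_comp_continuous (fun h => t + c * h) g 0 t Li).
  exact (ex_derive_continuous g t Hd).
Qed.

Lemma limK : forall Phi, smooth Phi -> forall x t,
    is_lim (fun tau => Kop tau Phi x t) 0 (- t * dx Phi x t - x * dt Phi x t).
Proof.
  intros Phi HPhi x t.
  assert (L1 := LQ (fun s => Phi x s) t (smooth_exdt Phi x t HPhi)).
  assert (L2 := LC (fun s => dx Phi x s) t (-1) (smooth_exdt (dx Phi) x t (smooth_dx _ HPhi))).
  assert (L := Lplus _ _ _ _ (Lscal _ _ (- x) L1) (Lscal _ _ (- t) L2)).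
  refine (is_lim_ext_loc _ _ _ _ (loc_all _ _) (is_lim_eq _ _ _ L _)).
  - intros y Hy. unfold Kop, op_sub, op_opp, op_comp, mulf, fwd, op_scal, op_sub, shift, op_id, X, T.
    replace (t + -1 * y) with (t + - y) by ring. ring.
  - unfold dt. ring.
Qed.

Lemma limD : forall Phi, smooth Phi -> forall x t,
    is_lim (fun tau => Dop tau Phi x t) 0 (- x * dx Phi x t - t * dt Phi x t).
Proof.
  intros Phi HPhi x t.
  assert (L1 := LB (fun s => Phi x s) t (smooth_exdt Phi x t HPhi)).
  assert (L := Lplus _ _ _ _ (Lscal _ _ (- x) (is_lim_const (dx Phi x t) 0)) (Lscal _ _ (- t) L1)).
  refine (is_lim_ext_loc _ _ _ _ (loc_all _ _) (is_lim_eq _ _ _ L _)).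
  - intros y Hy. unfold Dop, op_sub, op_opp, op_comp, mulf, bwd, op_scal, op_sub, shift, op_id, X, T.
    ring.
  - unfold dt. ring.
Qed.

Lemma limC1 : forall Phi, smooth Phi -> forall x t,
    is_lim (fun tau => C1op tau Phi x t) 0
      ((x ^ 2 + t ^ 2) * dt Phi x t + 2 * x * t * dx Phi x t).
Proof.
  intros Phi HPhi x t.
  assert (L1 := LQ (fun s => Phi x s) t (smooth_exdt Phi x t HPhi)).
  assert (L2 := LB (fun s => Phi x s) t (smooth_exdt Phi x t HPhi)).
  assert (L := Lplus _ _ _ _ (Lplus _ _ _ _ (Lplus _ _ _ _ (Lscal _ _ (x ^ 2) L1) (Lscal _ _ (t ^ 2) L2))
                 (is_lim_const (2 * x * t * dx Phi x t) 0))
                 (Lh _ _ (is_lim_const (x * dx Phi x t + x ^ 2 * dx (dx Phi) x t) 0))).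
  refine (is_lim_ext_loc _ _ _ _ (loc_all _ _) (is_lim_eq _ _ _ L _)).
  - intros y Hy. unfold C1op, op_add, op_sub, op_opp, op_comp, mulf, fwd, op_scal, op_sub, shift, op_id, X, T.
    replace (t + - y + y) with t by ring. ring.
  - unfold dt. ring.
Qed.

Lemma limC2 : forall Phi, smooth Phi -> forall x t,
    is_lim (fun tau => C2op tau Phi x t) 0
      (- (x ^ 2 + t ^ 2) * dx Phi x t - 2 * x * t * dt Phi x t).
Proof.
  intros Phi HPhi x t.
  assert (L1 := LB (fun s => Phi x s) t (smooth_exdt Phi x t HPhi)).
  assert (L2 := LC (fun s => dx Phi x s) t (-2) (smooth_exdt (dx Phi) x t (smooth_dx _ HPhi))).
  assert (L := Lplus _ _ _ _ (Lplus _ _ _ _ (Lplus _ _ _ _ (Lscal _ _ (- x ^ 2) (is_lim_const (dx Phi x t) 0))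
                 (Lscal _ _ (- t ^ 2) L2)) (Lscal _ _ (- (2 * x * t)) L1))
                 (Lh _ _ (Lscal _ _ t L2))).
  refine (is_lim_ext_loc _ _ _ _ (loc_all _ _) (is_lim_eq _ _ _ L _)).
  - intros y Hy. unfold C2op, op_add, op_sub, op_opp, op_comp, mulf, bwd, op_scal, op_sub, shift, op_id, X, T.
    replace (t + - 2 * y) with (t + -2 * y) by ring. ring.
  - unfold dt. ring.
Qed.

Theorem mainTheorem4 :
  (forall tau : R, tau <> 0 ->
    let H := Hop in let P := Pop in let K := Kop tau in let D := Dop tau in
    let C1 := C1op tau in let C2 := C2op tau in
    let Em := shift (- tau) in
    op_eq (comm K H) (op_comp Em P) /\
    op_eq (comm K P) (fwd tau) /\
    op_eq (comm H P) op_zero /\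
    op_eq (comm D H) (bwd tau) /\
    op_eq (comm D C1) (op_add (op_opp C1) (op_scal tau (op_comp D D))) /\
    op_eq (comm H C1) (op_scal (-2) D) /\
    op_eq (comm D P) P /\
    op_eq (comm D C2) (op_opp C2) /\
    op_eq (comm P C2) (op_scal 2 D) /\
    op_eq (comm K C1) C2 /\
    op_eq (comm K C2) (op_sub C1 (op_scal tau (op_comp D D))) /\
    op_eq (comm C1 C2) (op_scal (- tau) (op_add (op_comp D C2) (op_comp C2 D))) /\
    op_eq (comm H C2) (op_add (op_comp Em K) (op_comp K Em)) /\
    op_eq (comm P C1) (op_sub (op_scal (-2) K) (op_scal tau (op_add (op_comp D P) (op_comp P D)))) /\
    op_eq (comm K D) op_zero)
  /\
  (forall (Phi : Fun2), smooth Phi -> forall x t : R,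
    is_lim (fun tau => Kop tau Phi x t) 0 (- t * dx Phi x t - x * dt Phi x t) /\
    is_lim (fun tau => Dop tau Phi x t) 0 (- x * dx Phi x t - t * dt Phi x t) /\
    is_lim (fun tau => C1op tau Phi x t) 0
      ((x ^ 2 + t ^ 2) * dt Phi x t + 2 * x * t * dx Phi x t) /\
    is_lim (fun tau => C2op tau Phi x t) 0
      (- (x ^ 2 + t ^ 2) * dx Phi x t - 2 * x * t * dt Phi x t)).
Proof.
  split.
  - intros tau Htau. cbv zeta. unfold Hop, Pop, Kop, Dop, C1op, C2op.
    rewrite ?mulf_x2, ?mulf_t2, ?mulf_2xt, ?shift_m2.
    repeat split; solve_opeq tau.
  - intros Phi HPhi x t. split; [|split; [|split]].
    + apply limK; auto.
    + apply limD; auto.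
    + apply limC1; auto.
    + apply limC2; auto.
Qed.
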